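(* Let $r,m\ge0$ and $k\ge1$ be integers with $r+m\equiv1\pmod 2$, and let $n\ge0$. Then $$\lim_{q\to-1}\frac{\sum_{j=0}^{2n}q^{rj^2+mj}\begin{bmatrix} 2n\\ j\end{bmatrix}_{q^{2k}}}{(-q;q)_{2n}}=(k-r)^n,\qquad \lim_{q\to-1}\frac{\sum_{j=0}^{2n+1}q^{rj^2+mj}\begin{bmatrix} 2n+1\\ j\end{bmatrix}_{q^{2k}}}{(-q;q)_{2n+1}}=\big((2n+1)r+m\big)(k-r)^n.$$
   Context: $(x;q)_n=\prod_{j=0}^{n-1}(1-q^jx)$. The Gaussian binomial coefficient is $\begin{bmatrix} n\\ j\end{bmatrix}_q=\frac{(q;q)_n}{(q;q)_j(q;q)_{n-j}}$ for $0\le j\le n$, a polynomial in $q$; $\begin{bmatrix} n\\ j\end{bmatrix}_{q^{2k}}$ is this with $q$ replaced by $q^{2k}$. The quotients are rational functions of $q$ and the limits are taken as $q\to-1$. *)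

(* Defs.v *)
From Stdlib Require Import Reals.
Open Scope R_scope.

Fixpoint qpoch (x q : R) (n : nat) : R :=
  match n with
  | O => 1
  | S n' => qpoch x q n' * (1 - q ^ n' * x)
  end.

Definition gauss_binom (n j : nat) (q : R) : R :=
  qpoch q q n / (qpoch q q j * qpoch q q (n - j)).

Definition cor_num (r m k N : nat) (q : R) : R :=
  sum_f_R0 (fun j => q ^ (r * j * j + m * j) * gauss_binom N j (q ^ (2 * k))) N.

Definition cor_ratio (r m k N : nat) (q : R) : R :=
  cor_num r m k N q / qpoch (- q) q N.

(* Main.v *)
Require Import Defs.
From Stdlib Require Import Reals Lra Lia Factorial ClassicalEpsilon.
From Coquelicot Require Import Coquelicot.
Open Scope R_scope.


Definition near0 (f : R -> R -> R) (x0 L : R) : Prop :=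
  forall e, 0 < e -> exists d, 0 < d /\
    forall t u, 0 < t < d -> Rabs (u - x0) < d -> Rabs (f t u - L) < e.

Lemma near0_const c x0 : near0 (fun _ _ => c) x0 c.
Proof. intros e he; exists 1; split; [lra|]; intros; unfold Rminus; rewrite Rplus_opp_r, Rabs_R0; lra. Qed.

Lemma near0_fst x0 : near0 (fun t _ => t) x0 0.
Proof. intros e he; exists e; split; [lra|]; intros t u Ht _; rewrite Rminus_0_r, Rabs_right; lra. Qed.

Lemma near0_snd x0 : near0 (fun _ u => u) x0 x0.
Proof. intros e he; exists e; split; [lra|]; intros t u _ Hu; lra. Qed.

Lemma near0_plus f g x0 A B : near0 f x0 A -> near0 g x0 B ->
  near0 (fun t u => f t u + g t u) x0 (A + B).
Proof.
  intros Hf Hg e he.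
  destruct (Hf (e/2)) as [d1 [H1 H1']]; [lra|].
  destruct (Hg (e/2)) as [d2 [H2 H2']]; [lra|].
  exists (Rmin d1 d2); split; [apply Rmin_pos; lra|].
  intros t u Ht Hu.
  assert (Ha := Rmin_l d1 d2); assert (Hb := Rmin_r d1 d2).
  specialize (H1' t u ltac:(lra) ltac:(lra)); specialize (H2' t u ltac:(lra) ltac:(lra)).
  replace (f t u + g t u - (A + B)) with ((f t u - A) + (g t u - B)) by ring.
  eapply Rle_lt_trans; [apply Rabs_triang|]; lra.
Qed.

Lemma near0_mult f g x0 A B : near0 f x0 A -> near0 g x0 B ->
  near0 (fun t u => f t u * g t u) x0 (A * B).
Proof.
  intros Hf Hg e he.
  set (M := Rabs A + Rabs B + 1).
  assert (HM : 0 < M) by (unfold M; pose proof (Rabs_pos A); pose proof (Rabs_pos B); lra).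
  set (e1 := Rmin 1 (e / (2 * M))).
  assert (He1 : 0 < e1) by (apply Rmin_pos; [lra| apply Rdiv_lt_0_compat; lra]).
  destruct (Hf e1) as [d1 [H1 H1']]; [lra|].
  destruct (Hg e1) as [d2 [H2 H2']]; [lra|].
  exists (Rmin d1 d2); split; [apply Rmin_pos; lra|].
  intros t u Ht Hu.
  assert (Ha := Rmin_l d1 d2); assert (Hb := Rmin_r d1 d2).
  specialize (H1' t u ltac:(lra) ltac:(lra)); specialize (H2' t u ltac:(lra) ltac:(lra)).
  replace (f t u * g t u - A * B) with ((f t u - A) * (g t u - B) + (f t u - A) * B + A * (g t u - B)) by ring.
  assert (e1 <= 1) by apply Rmin_l.
  assert (e1 <= e / (2*M)) by apply Rmin_r.
  assert (Hx : e1 * M <= e / 2).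
  { apply Rle_trans with (e / (2 * M) * M). apply Rmult_le_compat_r; lra.
    right; field; lra. }
  eapply Rle_lt_trans; [apply Rabs_triang|].
  eapply Rle_lt_trans; [apply Rplus_le_compat_r; apply Rabs_triang|].
  rewrite !Rabs_mult.
  pose proof (Rabs_pos (f t u - A)); pose proof (Rabs_pos (g t u - B)).
  pose proof (Rabs_pos A); pose proof (Rabs_pos B).
  assert (Rabs (f t u - A) * Rabs (g t u - B) <= e1 * e1).
  { apply Rmult_le_compat; lra. }
  assert (Rabs (f t u - A) * Rabs B <= e1 * Rabs B) by (apply Rmult_le_compat_r; lra).
  assert (Rabs A * Rabs (g t u - B) <= Rabs A * e1) by (apply Rmult_le_compat_l; lra).
  assert (e1 * e1 <= e1 * 1) by (apply Rmult_le_compat_l; lra).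
  unfold M in Hx. nra.
Qed.

Lemma near0_ext f g x0 L :
  (exists d0, 0 < d0 /\ forall t u, 0 < t < d0 -> Rabs (u - x0) < d0 -> f t u = g t u) ->
  near0 g x0 L -> near0 f x0 L.
Proof.
  intros [d0 [Hd0 Heq]] Hg e he.
  destruct (Hg e he) as [d [Hd H]].
  exists (Rmin d0 d); split; [apply Rmin_pos; lra|].
  intros t u Ht Hu.
  assert (Ha := Rmin_l d0 d); assert (Hb := Rmin_r d0 d).
  rewrite Heq by lra. apply H; lra.
Qed.

Lemma near0_cont f h x0 L : near0 f x0 L -> continuity_pt h L ->
  near0 (fun t u => h (f t u)) x0 (h L).
Proof.
  intros Hf Hh e he.
  destruct (Hh e he) as [a [Ha Ha']].
  destruct (Hf a Ha) as [d [Hd H]].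
  exists d; split; auto. intros t u Ht Hu.
  destruct (Req_dec (f t u) L) as [E|E].
  - rewrite E; unfold Rminus; rewrite Rplus_opp_r, Rabs_R0; lra.
  - apply (Ha' (f t u)). split. split; [exact I| auto]. apply H; auto.
Qed.

Lemma near0_comp f g x0 x1 L : near0 f x1 L -> near0 g x0 x1 ->
  near0 (fun t u => f t (g t u)) x0 L.
Proof.
  intros Hf Hg e he.
  destruct (Hf e he) as [d1 [H1 H1']].
  destruct (Hg d1 H1) as [d2 [H2 H2']].
  exists (Rmin d1 d2); split; [apply Rmin_pos; lra|].
  intros t u Ht Hu.
  assert (Ha := Rmin_l d1 d2); assert (Hb := Rmin_r d1 d2).
  apply H1'. lra. apply H2'; lra.
Qed.

Lemma near0_squeeze V g1 g2 x0 x1 : near0 g1 x0 x1 -> near0 g2 x0 x1 ->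
  (exists d0, 0 < d0 /\ forall t u, 0 < t < d0 -> Rabs (u - x0) < d0 ->
      Rmin (g1 t u) (g2 t u) <= V t u <= Rmax (g1 t u) (g2 t u)) ->
  near0 V x0 x1.
Proof.
  intros H1 H2 [d0 [Hd0 HV]] e he.
  destruct (H1 e he) as [a [Ha Ha']].
  destruct (H2 e he) as [b [Hb Hb']].
  exists (Rmin d0 (Rmin a b)); split; [repeat apply Rmin_pos; lra|].
  intros t u Ht Hu.
  assert (A1 := Rmin_l d0 (Rmin a b)); assert (A2 := Rmin_r d0 (Rmin a b)).
  assert (A3 := Rmin_l a b); assert (A4 := Rmin_r a b).
  specialize (HV t u ltac:(lra) ltac:(lra)).
  specialize (Ha' t u ltac:(lra) ltac:(lra)).
  specialize (Hb' t u ltac:(lra) ltac:(lra)).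
  revert HV Ha' Hb'. unfold Rmin, Rmax.
  destruct (Rle_dec (g1 t u) (g2 t u)); intros;
  apply Rabs_def2 in Ha'; apply Rabs_def2 in Hb'; apply Rabs_def1; lra.
Qed.

Lemma near0_between T c f g1 g2 x0 x1 C F :
  near0 c x0 C -> near0 f x1 F -> near0 g1 x0 x1 -> near0 g2 x0 x1 ->
  (exists d0, 0 < d0 /\ forall t u, 0 < t < d0 -> Rabs (u - x0) < d0 ->
     exists v, Rmin (g1 t u) (g2 t u) <= v <= Rmax (g1 t u) (g2 t u) /\
               T t u = c t u * f t v) ->
  near0 T x0 (C * F).
Proof.
  intros Hc Hf H1 H2 [d0 [Hd0 HT]].
  set (P := fun t u v => (0 < t < d0 -> Rabs (u - x0) < d0 ->
     Rmin (g1 t u) (g2 t u) <= v <= Rmax (g1 t u) (g2 t u) /\ T t u = c t u * f t v)).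
  assert (HP : forall t u, exists v, P t u v).
  { intros t u. destruct (classic (0 < t < d0 /\ Rabs (u - x0) < d0)) as [[Ha Hb]|Hn].
    - destruct (HT t u Ha Hb) as [v Hv]. exists v. intros _ _. exact Hv.
    - exists 0. intros Ha Hb. exfalso. apply Hn; auto. }
  set (V := fun t u => epsilon (inhabits 0) (P t u)).
  assert (HV : forall t u, P t u (V t u)).
  { intros t u. unfold V. apply epsilon_spec. apply HP. }
  apply near0_ext with (g := fun t u => c t u * f t (V t u)).
  { exists d0; split; auto. intros t u Ht Hu. apply (HV t u Ht Hu). }
  apply near0_mult; auto.
  apply near0_comp with (x1 := x1); auto.
  apply near0_squeeze with g1 g2; auto.
  exists d0; split; auto. intros t u Ht Hu. apply (HV t u Ht Hu).
Qed.


Fixpoint Grec (r k : nat) (N d : nat) (y w : R) : R :=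
  match N with
  | O => match d with O => 1 | _ => 0 end
  | S N' => (y^k)^d * Grec r k N' d y (y^k * w)
            - (y^r)^d * w * Grec r k N' d y (y^r * w)
            - INR d * (y^r)^(d-1) * Grec r k N' (d-1) y (y^r * w)
  end.

Lemma is_derive_lin (G : R -> R) (c w dG : R) :
  is_derive G (c * w) dG -> is_derive (fun w => G (c * w)) w (c * dG).
Proof.
  intros H.
  assert (Hl : is_derive (fun w : R => c * w) w c).
  { pose proof (is_derive_scal (fun x => x) w c 1 (is_derive_id w)) as H0.
    rewrite Rmult_1_r in H0. exact H0. }
  pose proof (is_derive_comp G (fun w => c * w) w dG c H Hl) as Hc.
  exact Hc.
Qed.

Lemma Grec_derive r k N : forall d y w,
  is_derive (fun w => Grec r k N d y w) w (Grec r k N (S d) y w).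
Proof.
  induction N as [|N IH]; intros d y w.
  - simpl. destruct d; exact (@is_derive_const R_AbsRing _ _ w).
  - simpl Grec at 2.
    assert (H1 := is_derive_scal _ _ ((y^k)^d) _ (is_derive_lin _ (y^k) w _ (IH d y (y^k*w)))).
    assert (H2a : is_derive (fun w => w * Grec r k N d y (y^r * w)) w
        (1 * Grec r k N d y (y^r*w) + w * (y^r * Grec r k N (S d) y (y^r*w)))).
    { pose proof (is_derive_mult (fun w => w) (fun w => Grec r k N d y (y^r * w)) w 1 _
         (is_derive_id w) (is_derive_lin _ (y^r) w _ (IH d y (y^r*w))) Rmult_comm) as H.
      exact H. }
    assert (H2 := is_derive_scal _ _ ((y^r)^d) _ H2a).
    assert (H3 := is_derive_scal _ _ (INR d * (y^r)^(d-1)) _ (is_derive_lin _ (y^r) w _ (IH (d-1)%nat y (y^r*w)))).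
    assert (H := is_derive_minus _ _ _ _ _ (is_derive_minus _ _ _ _ _ H1 H2) H3).
    simpl in H.
    eapply is_derive_ext; [|refine (eq_ind _ (fun z => is_derive _ w z) H _ _)].
    + intros t; simpl; unfold minus, plus, opp; simpl; ring.
    + unfold minus, plus, opp, scal, mult; simpl. unfold mult; simpl.
      destruct d as [|d].
      * simpl. ring.
      * replace (S d - 1)%nat with d by lia. replace (S (S d) - 1)%nat with (S d) by lia.
        simpl. ring.
Qed.


Fixpoint geo (j : nat) (y : R) : R :=
  match j with O => 0 | S j => 1 + y * geo j y end.

Lemma geo_id j y : 1 - y ^ j = (1 - y) * geo j y.
Proof. induction j; simpl; [ring|]. replace (1 - y * y ^ j) with ((1 - y) + y * (1 - y^j)) by ring.
  rewrite IHj; ring. Qed.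

Lemma geo_cont j y : continuity_pt (geo j) y.
Proof.
  induction j; simpl.
  - apply continuity_pt_const; intros a b; auto.
  - apply continuity_pt_plus. apply continuity_pt_const; intros a b; auto.
    apply continuity_pt_mult; auto. apply derivable_continuous_pt, derivable_pt_id.
Qed.

Lemma geo_1 j : geo j 1 = INR j.
Proof. induction j; simpl geo; [simpl; ring|]. rewrite IHj, S_INR; ring. Qed.

Lemma near0_pow f x0 L n : near0 f x0 L -> near0 (fun t u => (f t u) ^ n) x0 (L ^ n).
Proof. intros H; induction n; simpl. apply near0_const. apply near0_mult; auto. Qed.

Lemma near0_geo f x0 j : near0 f x0 1 -> near0 (fun t u => geo j (f t u)) x0 (INR j).
Proof. intros H. rewrite <- geo_1. apply (near0_cont f (geo j)); auto. apply geo_cont. Qed.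

Lemma near0_minus f g x0 A B : near0 f x0 A -> near0 g x0 B ->
  near0 (fun t u => f t u - g t u) x0 (A - B).
Proof.
  intros Hf Hg. unfold Rminus.
  apply near0_plus; auto.
  replace (- B) with (-1 * B) by ring.
  apply near0_ext with (g := fun t u => -1 * g t u).
  exists 1; split; [lra|]; intros; ring.
  apply near0_mult; auto; apply near0_const.
Qed.

Fixpoint Qp (b : R) (N d : nat) (x : R) : R :=
  match N with
  | O => match d with O => 1 | _ => 0 end
  | S N' => x * Qp b N' d x - b * Qp b N' (S d) x - INR d * Qp b N' (d - 1) x
  end.

Definition Phi (r k : nat) (z : R) (N d : nat) (t u : R) : R :=
  t ^ d * Grec r k N d (1 - z * t ^ 2) (1 - t * u) / t ^ N.

Lemma between_map a b c t : 0 < t -> Rmin a b <= c <= Rmax a b ->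
  Rmin ((1 - a) / t) ((1 - b) / t) <= (1 - c) / t <= Rmax ((1 - a) / t) ((1 - b) / t).
Proof.
  intros Ht [H1 H2].
  assert (Hi : 0 < / t) by (apply Rinv_0_lt_compat; auto).
  unfold Rdiv, Rmin, Rmax in *.
  destruct (Rle_dec a b); destruct (Rle_dec ((1 - a) * / t) ((1 - b) * / t)); split; nra.
Qed.

Lemma Grec_cont r k N d y w : continuity_pt (fun w => Grec r k N d y w) w.
Proof.
  apply continuity_pt_filterlim.
  apply (@ex_derive_continuous R_AbsRing R_NormedModule (fun w => Grec r k N d y w) w).
  eexists. apply Grec_derive.
Qed.

Definition yy (z t : R) := 1 - z * t ^ 2.
Definition xiS (j : nat) (z t u : R) := z * t * geo j (yy z t) + (yy z t) ^ j * u.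

Lemma xiS_id j z t u : 1 - t * xiS j z t u = (yy z t) ^ j * (1 - t * u).
Proof.
  unfold xiS. pose proof (geo_id j (yy z t)) as H.
  replace (1 - yy z t) with (z * t ^ 2) in H by (unfold yy; ring).
  replace ((yy z t) ^ j) with (1 - z * t ^ 2 * geo j (yy z t)) by lra. ring.
Qed.

Lemma near0_yy z x0 : near0 (fun t _ => yy z t) x0 1.
Proof.
  replace 1 with (1 - z * 0 ^ 2) by ring.
  change (near0 (fun t u => (fun _ _ => 1) t u - (fun t _ => z * t ^ 2) t u) x0 (1 - z * 0 ^ 2)).
  apply near0_minus. apply near0_const. apply near0_mult. apply near0_const.
  apply near0_pow, near0_fst.
Qed.

Lemma near0_xiS j z x0 : near0 (xiS j z) x0 x0.
Proof.
  unfold xiS. replace x0 with (z * 0 * INR j + 1 ^ j * x0) at 2 by (rewrite pow1; ring).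
  apply near0_plus; apply near0_mult.
  - apply near0_mult; [apply near0_const| apply near0_fst].
  - apply near0_geo, near0_yy.
  - apply near0_pow, near0_yy.
  - apply near0_snd.
Qed.

Lemma Phi_xiS r k z N d j t u : Phi r k z N d t (xiS j z t u) =
  t ^ d * Grec r k N d (yy z t) ((yy z t) ^ j * (1 - t * u)) / t ^ N.
Proof. unfold Phi. rewrite xiS_id. reflexivity. Qed.

Lemma Grec_S r k N d y w : Grec r k (S N) d y w =
  (y^k)^d * Grec r k N d y (y^k * w) - (y^r)^d * w * Grec r k N d y (y^r * w)
  - INR d * (y^r)^(d-1) * Grec r k N (d-1) y (y^r * w).
Proof. reflexivity. Qed.

Lemma main_claim r k z N : forall d x0,
  near0 (Phi r k z N d) x0 (Qp ((INR k - INR r) * z) N d x0).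
Proof.
  induction N as [|N IH]; intros d x0.
  - destruct d; simpl.
    + apply near0_ext with (g := fun _ _ => 1). exists 1; split; [lra|]; intros; unfold Phi; simpl; field.
      apply near0_const.
    + apply near0_ext with (g := fun _ _ => 0). exists 1; split; [lra|]; intros; unfold Phi; simpl; field.
      apply near0_const.
  - set (b := (INR k - INR r) * z).
    set (T1 := fun t u => ((yy z t) ^ k) ^ d * t ^ d *
        (Grec r k N d (yy z t) ((yy z t) ^ k * (1 - t * u)) -
         Grec r k N d (yy z t) ((yy z t) ^ r * (1 - t * u))) / t ^ (S N)).
    set (c2 := fun t (_ : R) => z * t * (geo (r * d) (yy z t) - geo (k * d) (yy z t))).
    apply near0_ext with (g := fun t u =>
      T1 t u + c2 t u * Phi r k z N d t (xiS r z t u)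
      + ((yy z t) ^ r) ^ d * u * Phi r k z N d t (xiS r z t u)
      - INR d * ((yy z t) ^ r) ^ (d - 1) * Phi r k z N (d - 1) t (xiS r z t u)).
    { exists 1; split; [lra|]. intros t u Ht _.
      unfold T1, c2. rewrite !Phi_xiS. unfold Phi. change (1 - z * t ^ 2) with (yy z t). rewrite Grec_S.
      assert (E1 : ((yy z t) ^ r) ^ d = 1 - z * t ^ 2 * geo (r * d) (yy z t)).
      { rewrite <- pow_mult. pose proof (geo_id (r * d) (yy z t)) as H.
        replace (1 - yy z t) with (z * t ^ 2) in H by (unfold yy; ring). lra. }
      assert (E2 : ((yy z t) ^ k) ^ d = 1 - z * t ^ 2 * geo (k * d) (yy z t)).
      { rewrite <- pow_mult. pose proof (geo_id (k * d) (yy z t)) as H.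
        replace (1 - yy z t) with (z * t ^ 2) in H by (unfold yy; ring). lra. }
      replace (z * t * (geo (r * d) (yy z t) - geo (k * d) (yy z t))) with
        ((((yy z t)^k)^d - ((yy z t)^r)^d) / t) by (rewrite E1, E2; field; lra).
      clear E1 E2. set (y := yy z t).
      rewrite <- !tech_pow_Rmult.
      destruct d as [|d].
      - rewrite !pow_O. simpl INR. field; repeat split; try apply pow_nonzero; lra.
      - replace (S d - 1)%nat with d by lia. rewrite <- !tech_pow_Rmult. rewrite S_INR.
        field; repeat split; try apply pow_nonzero; lra. }
    replace (Qp b (S N) d x0) with
      ((- b) * Qp b N (S d) x0 + 0 * Qp b N d x0 + (1 ^ r) ^ d * x0 * Qp b N d x0
        - INR d * (1 ^ r) ^ (d - 1) * Qp b N (d - 1) x0)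
      by (simpl; rewrite !pow1; ring).
    apply near0_minus; [apply near0_plus; [apply near0_plus|]|].
    +
      apply near0_between with
        (c := fun t u => ((yy z t) ^ k) ^ d * (1 - t * u) * (z * (geo r (yy z t) - geo k (yy z t))))
        (f := Phi r k z N (S d)) (g1 := xiS r z) (g2 := xiS k z) (x1 := x0).
      * replace (- b) with ((1 ^ k) ^ d * (1 - 0 * x0) * (z * (INR r - INR k))) by
          (unfold b; rewrite !pow1; ring).
        apply near0_mult; [apply near0_mult|].
        -- apply near0_pow, near0_pow, near0_yy.
        -- apply near0_minus; [apply near0_const| apply near0_mult; [apply near0_fst|apply near0_snd]].
        -- apply near0_mult; [apply near0_const|]. apply near0_minus; apply near0_geo, near0_yy.
      * apply IH.
      * apply near0_xiS.
      * apply near0_xiS.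
      * exists 1; split; [lra|]. intros t u Ht _.
        set (y := yy z t). set (w := 1 - t * u).
        destruct (MVT_gen (fun w => Grec r k N d y w) (y ^ r * w) (y ^ k * w)
                   (fun w => Grec r k N (S d) y w)) as [c [Hc Hmvt]].
        { intros; apply Grec_derive. }
        { intros; apply Grec_cont. }
        exists ((1 - c) / t). split.
        -- assert (Hr : xiS r z t u = (1 - y ^ r * w) / t).
           { apply (Rmult_eq_reg_l t); [|lra]. unfold Rdiv. rewrite <- Rmult_assoc.
             rewrite (Rmult_comm t (1 - _)), Rmult_assoc, Rinv_r, Rmult_1_r by lra.
             pose proof (xiS_id r z t u) as H. unfold y, w. lra. }
           assert (Hk : xiS k z t u = (1 - y ^ k * w) / t).
           { apply (Rmult_eq_reg_l t); [|lra]. unfold Rdiv. rewrite <- Rmult_assoc.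
             rewrite (Rmult_comm t (1 - _)), Rmult_assoc, Rinv_r, Rmult_1_r by lra.
             pose proof (xiS_id k z t u) as H. unfold y, w. lra. }
           rewrite Hr, Hk. apply between_map; [lra|auto].
        -- unfold T1, Phi. fold y. fold w. change (1 - z * t ^ 2) with y. rewrite Hmvt.
           replace (1 - t * ((1 - c) / t)) with c by (field; lra).
           assert (Egr : y ^ k - y ^ r = z * t ^ 2 * (geo r y - geo k y)).
           { pose proof (geo_id r y) as H1. pose proof (geo_id k y) as H2.
             replace (1 - y) with (z * t ^ 2) in H1, H2 by (unfold y, yy; ring). lra. }
           replace (y ^ k * w - y ^ r * w) with ((y ^ k - y ^ r) * w) by ring.
           rewrite Egr. rewrite <- !tech_pow_Rmult. field; repeat split; try apply pow_nonzero; lra.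
    + apply near0_mult.
      * replace 0 with (z * 0 * (INR (r * d) - INR (k * d))) by ring.
        unfold c2. apply near0_mult. apply near0_mult. apply near0_const. apply near0_fst.
        apply near0_minus; apply near0_geo, near0_yy.
      * apply near0_comp with (x1 := x0). apply IH. apply near0_xiS.
    + apply near0_mult. apply near0_mult. apply near0_pow, near0_pow, near0_yy. apply near0_snd.
      apply near0_comp with (x1 := x0). apply IH. apply near0_xiS.
    + apply near0_mult. apply near0_mult. apply near0_const. apply near0_pow, near0_pow, near0_yy.
      apply near0_comp with (x1 := x0). apply IH. apply near0_xiS.
Qed.


Definition Fc (d i : nat) : R := INR (fact (d + 2 * i)) / (2 ^ i * INR (fact i)).

Lemma fact_pos' n : 0 < INR (fact n).
Proof. apply lt_0_INR, lt_O_fact. Qed.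

Lemma Fc_step1 d i : Fc d (S i) = Fc (S d) i + INR d * (match d with O => 0 | S d' => Fc d' (S i) end).
Proof.
  destruct d as [|d].
  - unfold Fc. replace (0 + 2 * S i)%nat with (S (1 + 2 * i)) by lia.
    replace (1 + 2 * i)%nat with (S (0 + 2*i)) by lia.
    rewrite !fact_simpl. rewrite !mult_INR. simpl pow. rewrite !S_INR.
    pose proof (fact_pos' i). pose proof (fact_pos' (0 + 2*i)).
    assert (0 < 2 ^ i) by (apply pow_lt; lra).
    rewrite !plus_INR, !mult_INR. simpl INR. field. pose proof (pos_INR i). repeat split; lra.
  - unfold Fc.
    set (M := (S d + 2 * i + 1)%nat).
    replace (S d + 2 * S i)%nat with (S M) by (unfold M; lia).
    replace (d + 2 * S i)%nat with M by (unfold M; lia).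
    replace (S (S d) + 2 * i)%nat with M by (unfold M; lia).
    assert (HM : INR M = INR d + 2 * INR i + 2).
    { unfold M. rewrite !plus_INR, mult_INR, S_INR. simpl. ring. }
    rewrite (fact_simpl M), (fact_simpl i), !mult_INR, !S_INR, HM.
    pose proof (fact_pos' i). pose proof (fact_pos' M). pose proof (pos_INR i).
    assert (0 < 2 ^ i) by (apply pow_lt; lra).
    simpl pow. field. repeat split; lra.
Qed.

Lemma Fc_step0 d : Fc d 0 = INR d * (match d with O => 0 | S d' => Fc d' 0 end) \/ d = O.
Proof.
  destruct d; [right; auto|left]. unfold Fc. simpl pow. rewrite !Nat.add_0_r.
  rewrite fact_simpl, mult_INR. simpl fact. simpl INR. field.
Qed.

Lemma Qp_zero b : forall N d,
  (forall i, N = (d + 2 * i)%nat -> Qp b N d 0 = (-1) ^ d * Fc d i * b ^ i) /\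
  ((forall i, N <> (d + 2 * i)%nat) -> Qp b N d 0 = 0).
Proof.
  induction N as [|N IH]; intros d.
  - split.
    + intros i Hi. assert (d = O /\ i = O) as [-> ->] by lia. unfold Fc; simpl. field.
    + intros Hn. destruct d; simpl; auto. exfalso; apply (Hn O); lia.
  - simpl Qp. rewrite Rmult_0_l.
    destruct (IH (S d)) as [A1 A2].
    destruct d as [|d].
    + split.
      * intros i Hi. destruct i as [|i]; [lia|].
        rewrite (A1 i) by lia. rewrite (Fc_step1 0 i). simpl. ring.
      * intros Hn. rewrite A2 by (intros i Hi; apply (Hn (S i)); lia). simpl; ring.
    + replace (S d - 1)%nat with d by lia.
      destruct (IH d) as [B1 B2].
      split.
      * intros i Hi. destruct i as [|i].
        -- rewrite A2 by lia. rewrite (B1 O) by lia.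
           destruct (Fc_step0 (S d)) as [E|E]; [|lia]. rewrite E. simpl pow. ring.
        -- rewrite (A1 i) by lia. rewrite (B1 (S i)) by lia.
           rewrite (Fc_step1 (S d) i). simpl pow. ring.
      * intros Hn.
        rewrite A2 by (intros i Hi; apply (Hn (S i)); lia).
        rewrite B2 by (intros i Hi; apply (Hn i); lia). ring.
Qed.

Definition Oc (n : nat) : R := Fc 0 n.

Lemma Qp_even b n : Qp b (2 * n) 0 0 = Oc n * b ^ n.
Proof. destruct (Qp_zero b (2*n) 0) as [H _]. rewrite (H n) by lia. unfold Oc; simpl; ring. Qed.

Lemma Qp_odd b n : Qp b (2 * n + 1) 1 0 = - (INR (2 * n + 1) * Oc n) * b ^ n.
Proof.
  destruct (Qp_zero b (2*n+1) 1) as [H _]. rewrite (H n) by lia.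
  unfold Oc, Fc. replace (1 + 2 * n)%nat with (S (0 + 2*n)) by lia.
  rewrite fact_simpl, mult_INR. replace (S (0 + 2 * n)) with (2 * n + 1)%nat by lia.
  simpl pow. field. split. apply not_0_INR, fact_neq_0. apply pow_nonzero; lra.
Qed.

Lemma Oc_S n : Oc (S n) = Oc n * INR (2 * n + 1).
Proof.
  unfold Oc, Fc. replace (0 + 2 * S n)%nat with (S (S (2 * n))) by lia.
  replace (0 + 2 * n)%nat with (2 * n)%nat by lia.
  rewrite !fact_simpl, !mult_INR. simpl pow.
  pose proof (fact_pos' n). pose proof (fact_pos' (2*n)).
  assert (0 < 2 ^ n) by (apply pow_lt; lra).
  rewrite !S_INR, !plus_INR, !mult_INR. simpl INR. field. pose proof (pos_INR n). repeat split; lra.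
Qed.

Lemma Oc_pos n : 0 < Oc n.
Proof. unfold Oc, Fc. apply Rdiv_lt_0_compat. apply fact_pos'.
  apply Rmult_lt_0_compat. apply pow_lt; lra. apply fact_pos'. Qed.


Fixpoint tri (j : nat) : nat := match j with O => O | S j => (tri j + j)%nat end.

Lemma tri_id j : (2 * tri j + j = j * j)%nat.
Proof. induction j; simpl tri; [reflexivity|]. nia. Qed.

Definition gbz (N j : nat) (p : R) : R := if (j <=? N)%nat then gauss_binom N j p else 0.

Definition Gsum (r k N : nat) (y w : R) : R :=
  sum_f_R0 (fun j => (-1) ^ j * (y ^ r) ^ (tri j) * gbz N j (y ^ k) * w ^ j) N.

Lemma qpoch_S x q n : qpoch x q (S n) = qpoch x q n * (1 - q ^ n * x).
Proof. reflexivity. Qed.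

Lemma pow_ne1 p m : 0 < p -> p <> 1 -> (0 < m)%nat -> p ^ m <> 1.
Proof.
  intros Hp H1 Hm E. destruct (Rlt_dec p 1) as [Hl|Hl].
  - assert (p ^ m < 1). { destruct m; [lia|]. apply pow_lt_1_compat; [lra|lia]. } lra.
  - assert (1 < p) by lra. assert (1 < p ^ m). { apply Rlt_pow_R1; auto. } lra.
Qed.

Lemma qpoch_nz p n : 0 < p -> p <> 1 -> qpoch p p n <> 0.
Proof.
  intros Hp H1. induction n; simpl; [lra|].
  apply Rmult_integral_contrapositive; split; auto.
  rewrite Rmult_comm, tech_pow_Rmult. pose proof (pow_ne1 p (S n) Hp H1 ltac:(lia)). lra.
Qed.


Lemma gbz_0 N p : 0 < p -> p <> 1 -> gbz N 0 p = 1.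
Proof. intros. unfold gbz, gauss_binom. simpl. rewrite Nat.sub_0_r. field; repeat split; try apply qpoch_nz; auto; lra. Qed.

Lemma gbz_pascal N j p : 0 < p -> p <> 1 ->
  gbz (S N) (S j) p = p ^ (S j) * gbz N (S j) p + gbz N j p.
Proof.
  intros Hp H1. unfold gbz.
  destruct (Nat.leb_spec (S j) (S N)); destruct (Nat.leb_spec (S j) N); destruct (Nat.leb_spec j N); try lia.
  -
    unfold gauss_binom.
    set (c := (N - S j)%nat).
    replace (S N - S j)%nat with (S c) by (unfold c; lia).
    replace (N - j)%nat with (S c) by (unfold c; lia).
    rewrite !qpoch_S.
    assert (HN : p ^ N = p ^ j * p * p ^ c).
    { replace N with (S j + c)%nat by (unfold c; lia). rewrite pow_add. simpl. ring. }
    rewrite HN.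
    pose proof (qpoch_nz p N Hp H1). pose proof (qpoch_nz p j Hp H1). pose proof (qpoch_nz p c Hp H1).
    pose proof (pow_ne1 p (S j) Hp H1 ltac:(lia)). pose proof (pow_ne1 p (S c) Hp H1 ltac:(lia)).
    simpl in *. field. repeat split; auto; lra.
  -
    assert (j = N) by lia. subst j. unfold gauss_binom.
    rewrite !Nat.sub_diag. pose proof (qpoch_nz p N Hp H1). pose proof (qpoch_nz p (S N) Hp H1).
    simpl qpoch at 3 6. field. auto.
  - rewrite Rmult_0_r; ring.
Qed.

Lemma Gsum_S r k N y w : 0 < y -> y <> 1 -> (1 <= k)%nat ->
  Gsum r k (S N) y w = Gsum r k N y (y ^ k * w) - w * Gsum r k N y (y ^ r * w).
Proof.
  intros Hy H1 Hk.
  assert (Hp : 0 < y ^ k) by (apply pow_lt; auto).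
  assert (Hp1 : y ^ k <> 1) by (apply pow_ne1; auto; lia).
  set (p := y ^ k). set (Y := y ^ r).
  set (u := fun j => (-1) ^ j * Y ^ tri j * gbz N j p * (p * w) ^ j).
  set (v := fun i => (-1) ^ i * Y ^ tri i * gbz N i p * (Y * w) ^ i).
  unfold Gsum. fold p Y. fold u.
  rewrite decomp_sum by lia. simpl pred.
  rewrite (sum_eq _ (fun i => u (S i) + v i * (- w))).
  2:{ intros i _. unfold u, v. rewrite gbz_pascal by auto. simpl tri. rewrite pow_add.
      simpl pow. rewrite !Rpow_mult_distr. ring. }
  rewrite plus_sum, <- scal_sum.
  assert (E : sum_f_R0 u (S N) = sum_f_R0 u N).
  { rewrite tech5. unfold u at 2. unfold gbz. destruct (Nat.leb_spec (S N) N); [lia|]. ring. }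
  rewrite <- E. rewrite (decomp_sum u (S N)) by lia. simpl pred.
  assert (E0 : u 0%nat = 1) by (unfold u; simpl; rewrite gbz_0 by auto; ring).
  rewrite E0. rewrite gbz_0 by auto. rewrite !pow_O. unfold v. ring.
Qed.

Lemma Grec_Gsum r k y : 0 < y -> y <> 1 -> (1 <= k)%nat ->
  forall N w, Grec r k N 0 y w = Gsum r k N y w.
Proof.
  intros Hy H1 Hk. induction N as [|N IH]; intros w.
  - unfold Gsum. simpl. rewrite gbz_0. ring. apply pow_lt; auto. apply pow_ne1; auto; lia.
  - rewrite Gsum_S by auto. simpl Grec. rewrite !IH. simpl. ring.
Qed.

Lemma sum_reflect f N : sum_f_R0 (fun j => f (N - j)%nat) N = sum_f_R0 f N.
Proof.
  revert f. induction N as [|N IH]; intros f; [simpl; reflexivity|].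
  rewrite decomp_sum by lia. simpl pred. rewrite Nat.sub_0_r.
  rewrite (sum_eq (fun i => f (S N - S i)%nat) (fun i => f (N - i)%nat)) by (intros; f_equal; lia).
  rewrite IH, tech5. ring.
Qed.

Lemma gb_sym N j p : (j <= N)%nat -> gauss_binom N (N - j) p = gauss_binom N j p.
Proof. intros H. unfold gauss_binom. replace (N - (N - j))%nat with j by lia. f_equal; ring. Qed.

Lemma Gsum_vanish r k n y : 0 < y ->
  Gsum r k (2 * n + 1) y (/ (y ^ r) ^ n) = 0.
Proof.
  intros Hy. set (N := (2 * n + 1)%nat). set (Y := y ^ r). set (p := y ^ k).
  assert (HY : 0 < Y) by (apply pow_lt; auto).
  set (h := fun j => (-1) ^ j * Y ^ (tri j + n * (N - j)) * gbz N j p).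
  assert (Hsum : Gsum r k N y (/ Y ^ n) * Y ^ (n * N) = sum_f_R0 h N).
  { unfold Gsum. fold Y p. rewrite Rmult_comm, scal_sum. apply sum_eq. intros j Hj. unfold h.
    rewrite pow_add. replace (Y ^ (n * N)) with (Y ^ (n * (N - j)) * (Y ^ n) ^ j).
    2:{ rewrite <- pow_mult, <- pow_add. f_equal. nia. }
    rewrite pow_inv. field. apply pow_nonzero, pow_nonzero; lra. }
  assert (Hh : sum_f_R0 h N = 0).
  { assert (E : sum_f_R0 h N = -1 * sum_f_R0 h N).
    { rewrite <- (sum_reflect h N) at 1. rewrite scal_sum. apply sum_eq. intros j Hj. unfold h.
      assert (Ht : (tri (N - j) + n * (N - (N - j)) = tri j + n * (N - j))%nat).
      { pose proof (tri_id (N - j)). pose proof (tri_id j). unfold N in *.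
        replace (2 * n + 1 - (2 * n + 1 - j))%nat with j by lia.
        set (a := (2 * n + 1 - j)%nat) in *.
        assert (a + j = 2 * n + 1)%nat by (unfold a; lia). nia. }
      rewrite Ht. unfold gbz. destruct (Nat.leb_spec (N - j) N); destruct (Nat.leb_spec j N); try lia.
      rewrite gb_sym by lia.
      assert (Hs : (-1) ^ (N - j) = - (-1) ^ j).
      { assert (Hm : (-1) ^ (N - j) * (-1) ^ j = -1).
        { rewrite <- pow_add. replace (N - j + j)%nat with (2 * n + 1)%nat by (unfold N; lia).
          rewrite pow_add, pow_mult. simpl. replace (-1 * (-1 * 1)) with 1 by ring. rewrite pow1. ring. }
        pose proof (pow_1_abs j) as Ha.
        assert (Hsq : (-1) ^ j * (-1) ^ j = 1).
        { rewrite <- pow_add. replace (j + j)%nat with (2 * j)%nat by lia. rewrite pow_mult.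
          replace ((-1) ^ 2) with 1 by (simpl; ring). apply pow1. }
        apply (Rmult_eq_reg_r ((-1) ^ j)). rewrite Hm. nra. intro Z. rewrite Z in Hsq. lra. }
      rewrite Hs. ring. }
    lra. }
  assert (HN : Y ^ (n * N) <> 0) by (apply pow_nonzero; lra).
  fold N. fold Y. apply (Rmult_eq_reg_r (Y ^ (n * N))); auto. rewrite Hsum, Hh. ring.
Qed.


Lemma near0_inv f x0 L : near0 f x0 L -> L <> 0 -> near0 (fun t u => / f t u) x0 (/ L).
Proof.
  intros H HL. apply (near0_cont f Rinv); auto.
  exact (continuity_pt_inv id L (derivable_continuous_pt _ _ (derivable_pt_id L)) HL).
Qed.

Lemma near0_sqrt f x0 L : near0 f x0 L -> 0 <= L -> near0 (fun t u => sqrt (f t u)) x0 (sqrt L).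
Proof. intros H HL. apply (near0_cont f sqrt); auto. apply continuity_pt_sqrt; auto. Qed.

Definition alt (j : nat) (q : R) : R := geo j (- q).

Fixpoint En (n : nat) (q : R) : R :=
  match n with
  | O => 1
  | S n => En n q * alt (2 * n + 1) q * ((1 + q ^ (2 * n + 2)) / (1 - q))
  end.

Lemma alt_odd j q : Nat.odd j = true -> 1 + q ^ j = (1 + q) * alt j q.
Proof.
  intros Hj. unfold alt.
  replace (1 + q) with (1 - - q) by ring. rewrite <- geo_id.
  apply Nat.odd_spec in Hj. destruct Hj as [t ->].
  replace (- q) with (-1 * q) by ring. rewrite Rpow_mult_distr.
  assert (E : (-1) ^ (2 * t + 1) = -1).
  { rewrite pow_add, pow_mult. replace ((-1) ^ 2) with 1 by (simpl; ring). rewrite pow1. simpl; ring. }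
  rewrite E. ring.
Qed.

Lemma En_S n q : En (S n) q = En n q * alt (2 * n + 1) q * ((1 + q ^ (2 * n + 2)) / (1 - q)).
Proof. reflexivity. Qed.

Lemma qpoch_even q n : q <> 1 -> qpoch (- q) q (2 * n) = (1 - q ^ 2) ^ n * En n q.
Proof.
  intros Hq. induction n as [|n IH]; [simpl; ring|].
  replace (2 * S n)%nat with (S (S (2 * n))) by lia.
  rewrite !qpoch_S, IH, En_S.
  replace (q ^ S (2 * n) * - q) with (- q ^ (2 * n + 2)) by
     (replace (2 * n + 2)%nat with (S (S (2 * n))) by lia; simpl; ring).
  replace (q ^ (2 * n) * - q) with (- q ^ (2 * n + 1)) by
     (replace (2 * n + 1)%nat with (S (2 * n)) by lia; simpl; ring).
  replace (1 - - q ^ (2 * n + 1)) with (1 + q ^ (2 * n + 1)) by ring.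
  rewrite (alt_odd (2 * n + 1) q) by (rewrite Nat.odd_add, Nat.odd_mul; reflexivity).
  simpl pow. field. lra.
Qed.

Lemma near0_En n g x0 : near0 g x0 (-1) -> near0 (fun t u => En n (g t u)) x0 (Oc n).
Proof.
  intros Hg. induction n as [|n IH].
  - simpl. unfold Oc, Fc. simpl. replace (1 / (1 * 1)) with 1 by field. apply near0_const.
  - rewrite Oc_S.
    change (near0 (fun t u => En n (g t u) * alt (2 * n + 1) (g t u) * ((1 + (g t u) ^ (2 * n + 2)) / (1 - g t u))) x0
      (Oc n * INR (2 * n + 1))).
    replace (Oc n * INR (2 * n + 1)) with (Oc n * INR (2 * n + 1) * ((1 + (-1) ^ (2 * n + 2)) / (1 - -1))).
    2:{ replace (2 * n + 2)%nat with (2 * (n + 1))%nat by lia.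
        rewrite pow_mult. replace ((-1)^2) with 1 by (simpl; ring). rewrite pow1. field. }
    apply near0_mult; [apply near0_mult|]; auto.
    + unfold alt. apply near0_geo.
      replace 1 with (- -1) by ring. apply (near0_cont g Ropp); auto.
      apply continuity_pt_opp, derivable_continuous_pt, derivable_pt_id.
    + unfold Rdiv. apply near0_mult. apply near0_plus. apply near0_const. apply near0_pow; auto.
      apply near0_inv. apply near0_minus; auto. apply near0_const. lra.
Qed.

Lemma En_pos_near n g x0 : near0 g x0 (-1) ->
  exists d, 0 < d /\ forall t u, 0 < t < d -> Rabs (u - x0) < d -> En n (g t u) <> 0.
Proof.
  intros Hg. destruct (near0_En n g x0 Hg (Oc n / 2)) as [d [Hd H]].
  pose proof (Oc_pos n); lra.
  exists d; split; auto. intros t u Ht Hu. specialize (H t u Ht Hu).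
  pose proof (Oc_pos n). apply Rabs_def2 in H. lra.
Qed.

Lemma num_id r m k N q : Nat.odd (r + m) = true ->
  cor_num r m k N q = Gsum r k N (q ^ 2) ((- q) ^ (r + m)).
Proof.
  intros Hs. unfold cor_num, Gsum. apply sum_eq. intros j Hj.
  unfold gbz. destruct (Nat.leb_spec j N); [|lia].
  rewrite <- pow_mult. replace (2 * k)%nat with (2 * k)%nat by reflexivity.
  rewrite <- !pow_mult.
  apply Nat.odd_spec in Hs. destruct Hs as [u Hu].
  replace (- q) with (-1 * q) by ring. rewrite Rpow_mult_distr. rewrite Hu.
  replace ((-1) ^ ((2 * u + 1) * j)) with ((-1) ^ j).
  2:{ replace ((2 * u + 1) * j)%nat with (2 * (u * j) + j)%nat by lia. rewrite pow_add, pow_mult.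
      replace ((-1)^2) with 1 by (simpl; ring). rewrite pow1. ring. }
  assert (Hsq : (-1) ^ j * (-1) ^ j = 1).
  { rewrite <- pow_add. replace (j + j)%nat with (2 * j)%nat by lia. rewrite pow_mult.
    replace ((-1) ^ 2) with 1 by (simpl; ring). apply pow1. }
  replace ((-1) ^ j * q ^ (2 * (r * tri j)) * gauss_binom N j (q ^ (2 * k)) * ((-1) ^ j * q ^ ((2 * u + 1) * j)))
    with (((-1) ^ j * (-1) ^ j) * (q ^ (2 * (r * tri j)) * q ^ ((2 * u + 1) * j)) * gauss_binom N j (q ^ (2 * k))) by ring.
  rewrite Hsq, <- pow_add.
  replace (2 * (r * tri j) + (2 * u + 1) * j)%nat with (r * j * j + m * j)%nat.
  - ring.
  - pose proof (tri_id j). nia.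
Qed.


Lemma sqrt_lt_sq a d : 0 <= a -> 0 < d -> a < d * d -> sqrt a < d.
Proof.
  intros Ha Hd H. rewrite <- (sqrt_square d) by lra. apply sqrt_lt_1; nra.
Qed.

Lemma side_limit (F : R -> R) (L : R) :
  (forall z, (z = 1 \/ z = -1) -> near0 (fun t _ => F (- sqrt (yy z t))) 0 L) ->
  limit1_in F (fun q => q <> -1) L (-1).
Proof.
  intros H e He.
  destruct (H 1 (or_introl eq_refl) e He) as [d1 [Hd1 H1]].
  destruct (H (-1) (or_intror eq_refl) e He) as [d2 [Hd2 H2]].
  set (d := Rmin (1/2) (Rmin (d1 * d1) (d2 * d2) / 3)).
  assert (Hd : 0 < d) by (unfold d; apply Rmin_pos; [lra| apply Rdiv_lt_0_compat; [apply Rmin_pos; nra| lra]]).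
  exists d; split; auto.
  intros q [Hq Hqd]. simpl in *. unfold R_dist in *.
  assert (Ha := Rmin_l (1/2) (Rmin (d1 * d1) (d2 * d2) / 3)).
  assert (Hb := Rmin_r (1/2) (Rmin (d1 * d1) (d2 * d2) / 3)).
  assert (Hc := Rmin_l (d1 * d1) (d2 * d2)). assert (Hc' := Rmin_r (d1 * d1) (d2 * d2)).
  fold d in Ha, Hb.
  apply Rabs_def2 in Hqd.
  destruct (Rlt_dec (-1) q) as [Hlt|Hge].
  - set (t := sqrt (1 - q * q)).
    assert (Hpos : 0 < 1 - q * q) by nra.
    assert (Ht : 0 < t) by (apply sqrt_lt_R0; auto).
    assert (Htd : t < d1).
    { apply sqrt_lt_sq; auto. lra. nra. }
    specialize (H1 t 0 ltac:(lra) ltac:(rewrite Rminus_0_r, Rabs_R0; lra)).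
    replace (- sqrt (yy 1 t)) with q in H1; auto.
    unfold yy. replace (1 - 1 * t ^ 2) with (Rsqr q).
    + rewrite sqrt_Rsqr_abs, Rabs_left by lra. ring.
    + unfold Rsqr. simpl. unfold t. rewrite Rmult_1_r, sqrt_sqrt by lra. ring.
  - assert (Hlt : q < -1) by (destruct (Req_dec q (-1)); [contradiction| lra]).
    set (t := sqrt (q * q - 1)).
    assert (Hpos : 0 < q * q - 1) by nra.
    assert (Ht : 0 < t) by (apply sqrt_lt_R0; auto).
    assert (Htd : t < d2).
    { apply sqrt_lt_sq; auto. lra. nra. }
    specialize (H2 t 0 ltac:(lra) ltac:(rewrite Rminus_0_r, Rabs_R0; lra)).
    replace (- sqrt (yy (-1) t)) with q in H2; auto.
    unfold yy. replace (1 - -1 * t ^ 2) with (Rsqr q).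
    + rewrite sqrt_Rsqr_abs, Rabs_left by lra. ring.
    + unfold Rsqr. simpl. unfold t. rewrite Rmult_1_r, sqrt_sqrt by lra. ring.
Qed.

Definition xs (z t : R) := sqrt (yy z t).
Definition xiE (s : nat) (z t : R) := z * t * geo s (xs z t) / (1 + xs z t).

Lemma yy_range z t : (z = 1 \/ z = -1) -> 0 < t < 1/2 -> 0 < yy z t /\ yy z t <> 1.
Proof. intros [-> | ->] Ht; unfold yy; simpl; split; nra. Qed.

Lemma xs_sq z t : (z = 1 \/ z = -1) -> 0 < t < 1/2 -> xs z t * xs z t = yy z t /\ 0 < xs z t.
Proof.
  intros Hz Ht. destruct (yy_range z t Hz Ht) as [H1 H2]. unfold xs. split.
  apply sqrt_sqrt; lra. apply sqrt_lt_R0; auto.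
Qed.

Lemma near0_xs z x0 : near0 (fun t _ => xs z t) x0 1.
Proof. unfold xs. rewrite <- sqrt_1. apply near0_sqrt. apply near0_yy. lra. Qed.

Lemma near0_xiE s z : near0 (fun t _ => xiE s z t) 0 0.
Proof.
  unfold xiE. replace 0 with (z * 0 * INR s / (1 + 1)) at 2 by field.
  unfold Rdiv. apply near0_mult. apply near0_mult. apply near0_mult. apply near0_const. apply near0_fst.
  apply near0_geo, near0_xs. apply near0_inv. apply near0_plus. apply near0_const. apply near0_xs. lra.
Qed.

Lemma xiE_id s z t : (z = 1 \/ z = -1) -> 0 < t < 1/2 -> 1 - t * xiE s z t = xs z t ^ s.
Proof.
  intros Hz Ht. destruct (xs_sq z t Hz Ht) as [H1 H2].
  unfold xiE. pose proof (geo_id s (xs z t)) as G.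
  assert (E : 1 - xs z t = z * t ^ 2 / (1 + xs z t)).
  { apply (Rmult_eq_reg_r (1 + xs z t)); [|lra]. unfold Rdiv. rewrite Rmult_assoc, Rinv_l by lra.
    unfold yy in H1. nra. }
  rewrite E in G. rewrite <- (Rminus_0_r (xs z t ^ s)). replace (xs z t ^ s - 0) with (1 - (1 - xs z t ^ s)) by ring.
  rewrite G. field. lra.
Qed.

Lemma z_sq z n : (z = 1 \/ z = -1) -> z ^ n * z ^ n = 1.
Proof. intros [-> | ->]. rewrite pow1; ring. rewrite <- Rpow_mult_distr. replace (-1 * -1) with 1 by ring. apply pow1. Qed.

Lemma even_side r m k n z : (1 <= k)%nat -> Nat.odd (r + m) = true -> (z = 1 \/ z = -1) ->
  near0 (fun t _ => cor_ratio r m k (2 * n) (- sqrt (yy z t))) 0 ((INR k - INR r) ^ n).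
Proof.
  intros Hk Hs Hz.
  apply near0_ext with (g := fun t u => Phi r k z (2 * n) 0 t (xiE (r + m) z t) * (z ^ n * / En n (- xs z t))).
  - destruct (En_pos_near n (fun t _ => - xs z t) 0) as [d0 [Hd0 HE]].
    { replace (-1) with (- 1) by ring. apply (near0_cont (fun t _ => xs z t) Ropp). apply near0_xs.
      apply continuity_pt_opp, derivable_continuous_pt, derivable_pt_id. }
    exists (Rmin d0 (1/2)); split; [apply Rmin_pos; lra|]. intros t u Ht Hu.
    assert (A1 := Rmin_l d0 (1/2)); assert (A2 := Rmin_r d0 (1/2)).
    assert (Ht' : 0 < t < 1/2) by lra.
    specialize (HE t 0 ltac:(lra) ltac:(rewrite Rminus_0_r, Rabs_R0; lra)).
    destruct (xs_sq z t Hz Ht') as [X1 X2]. destruct (yy_range z t Hz Ht') as [Y1 Y2].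
    fold (xs z t).
    unfold cor_ratio. rewrite num_id by auto.
    replace ((- - xs z t) ^ (r + m)) with (xs z t ^ (r + m)) by (f_equal; ring).
    replace ((- xs z t) ^ 2) with (yy z t) by (simpl; nra).
    rewrite <- Grec_Gsum by auto.
    rewrite qpoch_even by lra.
    replace (1 - (- xs z t) ^ 2) with (z * t ^ 2) by (simpl; unfold yy in X1; nra).
    unfold Phi. change (1 - z * t ^ 2) with (yy z t). rewrite xiE_id by auto.
    pose proof (z_sq z n Hz) as Z.
    assert (Zn : z ^ n <> 0) by (intro E; rewrite E in Z; lra).
    assert (Iz : / z ^ n = z ^ n).
    { apply (Rmult_eq_reg_l (z ^ n)); auto. rewrite Rinv_r; auto. }
    replace (z ^ n * / En n (- xs z t)) with (/ z ^ n * / En n (- xs z t)) by (rewrite Iz; reflexivity).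
    rewrite Rpow_mult_distr, <- pow_mult.
    field. repeat split; auto; apply pow_nonzero; lra.
  - assert (HO := Oc_pos n).
    replace ((INR k - INR r) ^ n) with
      (Qp ((INR k - INR r) * z) (2 * n) 0 0 * (z ^ n * / Oc n)).
    2:{ rewrite Qp_even. rewrite Rpow_mult_distr. pose proof (z_sq z n Hz).
        replace (Oc n * ((INR k - INR r) ^ n * z ^ n) * (z ^ n * / Oc n)) with
          ((INR k - INR r) ^ n * (z ^ n * z ^ n) * (Oc n * / Oc n)) by ring.
        rewrite H, Rinv_r by lra. ring. }
    apply near0_mult.
    + apply near0_comp with (x1 := 0) (g := fun t _ => xiE (r + m) z t).
      apply main_claim. apply near0_xiE.
    + apply near0_mult. apply near0_const. apply near0_inv; [|lra].
      apply near0_En. replace (-1) with (- 1) by ring.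
      apply (near0_cont (fun t _ => xs z t) Ropp). apply near0_xs.
      apply continuity_pt_opp, derivable_continuous_pt, derivable_pt_id.
Qed.

Definition xi0 (r n : nat) (z t : R) := - z * t * geo (r * n) (yy z t) / (yy z t) ^ (r * n).

Lemma near0_xi0 r n z : near0 (fun t _ => xi0 r n z t) 0 0.
Proof.
  unfold xi0. replace 0 with (- z * 0 * INR (r * n) * / 1 ^ (r * n)) at 2 by (rewrite pow1; field).
  unfold Rdiv. apply near0_mult. apply near0_mult. apply near0_mult. apply near0_const. apply near0_fst.
  apply near0_geo, near0_yy. apply near0_inv. apply near0_pow, near0_yy. rewrite pow1; lra.
Qed.

Lemma xi0_id r n z t : (z = 1 \/ z = -1) -> 0 < t < 1/2 -> 1 - t * xi0 r n z t = / ((yy z t) ^ r) ^ n.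
Proof.
  intros Hz Ht. destruct (yy_range z t Hz Ht) as [Y1 Y2].
  unfold xi0. rewrite <- pow_mult. pose proof (geo_id (r * n) (yy z t)) as G.
  replace (1 - yy z t) with (z * t ^ 2) in G by (unfold yy; ring).
  assert (0 < yy z t ^ (r * n)) by (apply pow_lt; auto).
  apply (Rmult_eq_reg_r (yy z t ^ (r * n))); [|lra].
  rewrite Rinv_l by lra. unfold Rdiv.
  replace ((1 - t * (- z * t * geo (r * n) (yy z t) * / yy z t ^ (r * n))) * yy z t ^ (r * n))
    with (yy z t ^ (r * n) + z * t ^ 2 * geo (r * n) (yy z t) * (yy z t ^ (r * n) * / yy z t ^ (r * n))) by ring.
  rewrite Rinv_r by lra. lra.
Qed.

Lemma geo_pos j x : 0 < x -> (1 <= j)%nat -> 1 <= geo j x.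
Proof.
  intros Hx Hj. induction j as [|j IH]; [lia|]. simpl.
  destruct j. simpl. lra.
  assert (1 <= geo (S j) x) by (apply IH; lia). nra.
Qed.

Lemma odd_side r m k n z : (1 <= k)%nat -> Nat.odd (r + m) = true -> (z = 1 \/ z = -1) ->
  near0 (fun t _ => cor_ratio r m k (2 * n + 1) (- sqrt (yy z t))) 0
    ((INR (2 * n + 1) * INR r + INR m) * (INR k - INR r) ^ n).
Proof.
  intros Hk Hs Hz.
  assert (HO := Oc_pos n).
  pose proof (z_sq z n Hz) as Z.
  assert (Zn : z ^ n <> 0) by (intro E; rewrite E in Z; lra).
  assert (Iz : / z ^ n = z ^ n).
  { apply (Rmult_eq_reg_l (z ^ n)); auto. rewrite Rinv_r; auto. }
  assert (Hq : near0 (fun t _ => - xs z t) 0 (-1)).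
  { replace (-1) with (- 1) by ring.
    apply (near0_cont (fun t _ => xs z t) Ropp). apply near0_xs.
    apply continuity_pt_opp, derivable_continuous_pt, derivable_pt_id. }
  replace ((INR (2 * n + 1) * INR r + INR m) * (INR k - INR r) ^ n) with
    ((- INR (r + m + 2 * r * n) / 1 ^ (2 * r * n) * (z ^ n * / (Oc n * INR (2 * n + 1))))
     * Qp ((INR k - INR r) * z) (2 * n + 1) 1 0).
  2:{ rewrite Qp_odd, Rpow_mult_distr, pow1.
      assert (0 < INR (2 * n + 1)) by (apply lt_0_INR; lia).
      replace (- INR (r + m + 2 * r * n) / 1 * (z ^ n * / (Oc n * INR (2 * n + 1))) *
        (- (INR (2 * n + 1) * Oc n) * ((INR k - INR r) ^ n * z ^ n))) with
        (INR (r + m + 2 * r * n) * (INR k - INR r) ^ n * (z ^ n * z ^ n)) by (field; lra).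
      rewrite Z. rewrite !plus_INR, !mult_INR. simpl INR. ring. }
  destruct (En_pos_near n (fun t _ => - xs z t) 0 Hq) as [d0 [Hd0 HE]].
  apply near0_between with
    (c := fun t _ => - geo (r + m + 2 * r * n) (xs z t) / (xs z t) ^ (2 * r * n) *
             (z ^ n * / (En n (- xs z t) * alt (2 * n + 1) (- xs z t))))
    (f := Phi r k z (2 * n + 1) 1) (x1 := 0)
    (g1 := fun t _ => xi0 r n z t) (g2 := fun t _ => xiE (r + m) z t).
  - unfold Rdiv. apply near0_mult. apply near0_mult.
    + apply near0_cont with (h := Ropp) (f := fun t _ => geo (r + m + 2 * r * n) (xs z t)).
      apply near0_geo, near0_xs. apply continuity_pt_opp, derivable_continuous_pt, derivable_pt_id.
    + apply near0_inv. apply near0_pow, near0_xs. rewrite pow1; lra.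
    + apply near0_mult. apply near0_const. apply near0_inv.
      apply near0_mult. apply near0_En; auto.
      unfold alt. apply near0_ext with (g := fun t _ => geo (2 * n + 1) (xs z t)).
      { exists 1; split; [lra|]. intros; f_equal; ring. }
      apply near0_geo, near0_xs.
      assert (0 < INR (2 * n + 1)) by (apply lt_0_INR; lia). nra.
  - apply main_claim.
  - apply near0_xi0.
  - apply near0_xiE.
  - exists (Rmin d0 (1/2)); split; [apply Rmin_pos; lra|]. intros t u Ht Hu.
    assert (A1 := Rmin_l d0 (1/2)); assert (A2 := Rmin_r d0 (1/2)).
    assert (Ht' : 0 < t < 1/2) by lra.
    specialize (HE t 0 ltac:(lra) ltac:(rewrite Rminus_0_r, Rabs_R0; lra)).
    destruct (xs_sq z t Hz Ht') as [X1 X2]. destruct (yy_range z t Hz Ht') as [Y1 Y2].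
    set (x := xs z t) in *. set (y := yy z t) in *.
    set (w := x ^ (r + m)). set (w0 := / (y ^ r) ^ n).
    destruct (MVT_gen (fun w => Grec r k (2 * n + 1) 0 y w) w0 w
               (fun w => Grec r k (2 * n + 1) 1 y w)) as [c0 [Hc Hmvt]].
    { intros; apply Grec_derive. }
    { intros; apply Grec_cont. }
    exists ((1 - c0) / t). split.
    + assert (H1 : xi0 r n z t = (1 - w0) / t).
      { unfold w0, y. rewrite <- (xi0_id r n z t Hz Ht'). field. lra. }
      assert (H2 : xiE (r + m) z t = (1 - w) / t).
      { unfold w, x. rewrite <- (xiE_id (r + m) z t Hz Ht'). field. lra. }
      rewrite H1, H2. apply between_map; [lra|auto].
    + change (sqrt y) with x.
      unfold cor_ratio. rewrite num_id by auto.
      replace ((- - x) ^ (r + m)) with w by (unfold w; f_equal; ring).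
      replace ((- x) ^ 2) with y by (simpl; nra).
      rewrite <- (Grec_Gsum r k y Y1 Y2 Hk).
      assert (Hv : Grec r k (2 * n + 1) 0 y w0 = 0).
      { rewrite Grec_Gsum by auto. apply Gsum_vanish; auto. }
      replace (Grec r k (2 * n + 1) 0 y w) with (Grec r k (2 * n + 1) 1 y c0 * (w - w0)) by lra.
      replace (2 * n + 1)%nat with (S (2 * n)) at 2 by lia.
      rewrite qpoch_S, qpoch_even by lra.
      replace (1 - (- x) ^ 2) with (z * t ^ 2) by (simpl; unfold y, yy in X1; nra).
      replace (1 - (- x) ^ (2 * n) * - - x) with (1 + (- x) ^ (2 * n + 1))
        by (replace (2 * n + 1)%nat with (S (2 * n)) by lia; simpl; ring).
      rewrite alt_odd by (rewrite Nat.odd_add, Nat.odd_mul; reflexivity).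
      assert (E3 : w - w0 = - (1 - x) * geo (r + m + 2 * r * n) x / x ^ (2 * r * n)).
      { pose proof (geo_id (r + m + 2 * r * n) x) as G.
        assert (0 < x ^ (2 * r * n)) by (apply pow_lt; auto).
        unfold w, w0. replace ((y ^ r) ^ n) with (x ^ (2 * r * n)).
        2:{ rewrite <- X1. rewrite <- pow_mult. replace (x * x) with (x ^ 2) by ring.
            rewrite <- pow_mult. f_equal. lia. }
        replace (- (1 - x) * geo (r + m + 2 * r * n) x) with (-(1 - x ^ (r + m + 2 * r * n))) by (rewrite G; ring).
        rewrite (pow_add x (r + m)). field. lra. }
      rewrite E3. unfold Phi. change (1 - z * t ^ 2) with y.
      replace (1 - t * ((1 - c0) / t)) with c0 by (field; lra).
      assert (Hal : 1 <= alt (2 * n + 1) (- x)).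
      { unfold alt. replace (- - x) with x by ring. apply geo_pos; auto; lia. }
      assert (0 < x ^ (2 * r * n)) by (apply pow_lt; auto).
      replace (z ^ n * / (En n (- x) * alt (2 * n + 1) (- x))) with
        (/ z ^ n * / (En n (- x) * alt (2 * n + 1) (- x))) by (rewrite Iz; reflexivity).
      rewrite Rpow_mult_distr, <- pow_mult.
      rewrite (pow_add t (2 * n) 1). assert (Hx1 : x <> 1) by (intro E; apply Y2; rewrite <- X1, E; ring). field. repeat split; try lra; try apply pow_nonzero; lra.
Qed.


Theorem corollary2p5 (r m k n : nat) (hk : (1 <= k)%nat)
  (hrm : Nat.odd (r + m) = true) :
  limit1_in (cor_ratio r m k (2 * n)) (fun q => q <> -1)
    ((INR k - INR r) ^ n) (-1)
  /\
  limit1_in (cor_ratio r m k (2 * n + 1)) (fun q => q <> -1)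
    ((INR (2 * n + 1) * INR r + INR m) * (INR k - INR r) ^ n) (-1).
Proof.
  split; apply side_limit; intros z Hz.
  - apply even_side; auto.
  - apply odd_side; auto.
Qed.
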